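(* Let $G$ and $H$ be nontrivial finite groups such that the cyclic graph $\Delta(G\times H)$ is connected. Then $\mathrm{diam}(\Delta(G\times H))\le 7$.
   Context: For a finite group $X$, the cyclic graph $\Delta(X)$ has vertex set $X^{\#}=X\setminus\{1\}$, and distinct vertices $x,y$ are adjacent if and only if the subgroup $\langle x,y\rangle$ is cyclic. The diameter is the maximum graph distance between two vertices. *)

(* Defs.v *)
From mathcomp Require Import all_boot all_fingroup all_solvable.
Set Implicit Arguments.
Unset Strict Implicit.
Unset Printing Implicit Defensive.
Local Open Scope group_scope.

Definition cyc_adj (X : finGroupType) : rel X :=
  fun x y => [&& x != 1, y != 1, x != y & cyclic <<[set x; y]>>].

Definition cyclic_graph_connected (X : finGroupType) : Prop :=
  forall x y : X, x != 1 -> y != 1 -> connect (@cyc_adj X) x y.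

Definition cyc_dist_le (X : finGroupType) (n : nat) (x y : X) : Prop :=
  exists2 s : seq X, size s <= n & path (@cyc_adj X) x s && (last x s == y).

Definition cyclic_graph_diam_le (X : finGroupType) (n : nat) : Prop :=
  forall x y : X, x != 1 -> y != 1 -> cyc_dist_le n x y.

(* Main.v *)
Require Import Defs.
From mathcomp Require Import all_boot all_fingroup all_solvable.
Set Implicit Arguments. Unset Strict Implicit. Unset Printing Implicit Defensive.
Local Open Scope group_scope.

Section Adj.
Variable X : finGroupType.
Implicit Types x y z c : X.

Lemma adjP x y : cyc_adj x y -> exists c, x \in <[c]> /\ y \in <[c]>.
Proof.
case/and4P=> _ _ _ /cyclicP[c Ec]; exists c.
by rewrite -Ec !mem_gen // !inE eqxx ?orbT.
Qed.

Lemma adj_intro x y c : x != 1 -> y != 1 -> x != y ->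
  x \in <[c]> -> y \in <[c]> -> cyc_adj x y.
Proof.
move=> x1 y1 xy xc yc; rewrite /cyc_adj x1 y1 xy /=.
apply: (cyclicS _ (cycle_cyclic c)); rewrite gen_subG.
by apply/subsetP=> u /set2P[->|->].
Qed.

Lemma adj_sym x y : cyc_adj x y = cyc_adj y x.
Proof.
rewrite /cyc_adj [[set y; x]]setUC [y == x]eq_sym.
by case: (x != 1); case: (y != 1).
Qed.

Lemma adj_cc x y : x != 1 -> y != 1 -> commute x y -> coprime #[x] #[y] ->
  cyc_adj x y.
Proof.
move=> x1 y1 cxy co; apply: (@adj_intro x y (x * y)) => //.
- apply: contraNneq x1 => exy; rewrite -order_eq1.
  by move: co; rewrite exy /coprime gcdnn.
- by apply: (subsetP (cycleMsub cxy co)); exact: cycle_id.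
- rewrite cxy; apply: (subsetP (cycleMsub (esym cxy) _)); last exact: cycle_id.
  by rewrite coprime_sym.
Qed.

Lemma dist0 n x : cyc_dist_le n x x.
Proof. by rewrite /cyc_dist_le; exists [::] => //=; rewrite eqxx. Qed.

Lemma dist_adj x y : cyc_adj x y -> cyc_dist_le 1 x y.
Proof. by move=> a; rewrite /cyc_dist_le; exists [:: y] => //=; rewrite a eqxx. Qed.

Lemma dist_trans m n x y z :
  cyc_dist_le m x y -> cyc_dist_le n y z -> cyc_dist_le (m + n) x z.
Proof.
case=> s1 z1 /andP[p1 /eqP l1] [s2 z2 /andP[p2 /eqP l2]].
rewrite /cyc_dist_le; exists (s1 ++ s2); first by rewrite size_cat leq_add.
by rewrite cat_path last_cat l1 p1 p2 l2 eqxx.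
Qed.

Lemma dist_mono m n x y : m <= n -> cyc_dist_le m x y -> cyc_dist_le n x y.
Proof. by move=> mn [s z1 p]; rewrite /cyc_dist_le; exists s => //; apply: leq_trans mn. Qed.

Lemma dist_sym n x y : cyc_dist_le n x y -> cyc_dist_le n y x.
Proof.
case=> s; elim: s x n => [|a s IH] x n /=.
  by move=> _ /eqP->; apply: dist0.
case: n => // n sz /andP[/andP[xa pa] la].
have := IH a n sz; rewrite pa la => /(_ isT) d.
rewrite -addn1; apply: dist_trans d _; apply: dist_adj; by rewrite adj_sym.
Qed.

Lemma dist_pow x z : x != 1 -> z != 1 -> z \in <[x]> -> cyc_dist_le 1 x z.
Proof.
move=> x1 z1 zx; have [->|nzx] := eqVneq x z; first exact: dist0.
by apply: dist_adj; apply: (adj_intro (c := x)) => //; exact: cycle_id.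
Qed.

Lemma prime_pow x : x != 1 -> exists2 z, z \in <[x]> & prime #[z].
Proof.
move=> x1; have o1 : 1 < #[x] by rewrite order_gt1.
have pp := pdiv_prime o1.
have [z zx oz] := Cauchy pp ((pdiv_dvd #[x])).
by exists z; rewrite // oz.
Qed.

Lemma prime_neq1 x : prime #[x] -> x != 1.
Proof. by move=> p; rewrite -order_gt1 prime_gt1. Qed.
End Adj.

Lemma order_eq (A B : finGroupType) (x : A) (y : B) :
  (forall n, (x ^+ n == 1) = (y ^+ n == 1)) -> #[x] = #[y].
Proof.
move=> E; apply/eqP; rewrite eqn_dvd !order_dvdn E expg_order eqxx -E expg_order.
by rewrite eqxx.
Qed.

Section Pairs.
Variables G H : finGroupType.
Implicit Types x y z w : (G * H)%type.

Lemma expg_fst x n : (x ^+ n).1 = x.1 ^+ n.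
Proof. elim: n => [|n IH]; first by []. by rewrite !expgS -IH. Qed.
Lemma expg_snd x n : (x ^+ n).2 = x.2 ^+ n.
Proof. elim: n => [|n IH]; first by []. by rewrite !expgS -IH. Qed.

Lemma pair_eq1 x : (x == 1) = (x.1 == 1) && (x.2 == 1).
Proof. by case: x. Qed.

Lemma order_pg1 (a : G) : #[((a, 1) : G * H)] = #[a].
Proof.
by apply: order_eq => n; rewrite pair_eq1 expg_fst expg_snd /= expg1n eqxx andbT.
Qed.
Lemma order_p1g (b : H) : #[((1, b) : G * H)] = #[b].
Proof.
by apply: order_eq => n; rewrite pair_eq1 expg_fst expg_snd /= expg1n eqxx.
Qed.

Lemma prime_order_eq (A : finGroupType) (x : A) p :
  prime p -> x != 1 -> x ^+ p = 1 -> #[x] = p.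
Proof.
move=> pp x1 xp; have : #[x] %| p by rewrite order_dvdn xp.
case/primeP: pp => _ /[apply] /orP[/eqP o1|/eqP //].
by move: x1; rewrite -order_gt1 o1.
Qed.

Lemma order_fst x : x.1 != 1 -> prime #[x] -> #[x.1] = #[x].
Proof.
move=> x1 px; apply: prime_order_eq => //.
by rewrite -expg_fst expg_order.
Qed.
Lemma order_snd x : x.2 != 1 -> prime #[x] -> #[x.2] = #[x].
Proof.
move=> x1 px; apply: prime_order_eq => //.
by rewrite -expg_snd expg_order.
Qed.

Lemma commute_fst x y : commute x y -> commute x.1 y.1.
Proof. by move=> c; rewrite /commute -!fst_morphM c. Qed.
Lemma commute_snd x y : commute x y -> commute x.2 y.2.
Proof. by move=> c; rewrite /commute -!snd_morphM c. Qed.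
Lemma commute_pair (a c : G) (b d : H) :
  commute a c -> commute b d -> commute ((a, b) : G * H) (c, d).
Proof. by move=> e1 e2; rewrite /commute /mulg /= /mul_pair /=; congr (_, _). Qed.
End Pairs.

Lemma cycle_commute (X : finGroupType) (c u v : X) :
  u \in <[c]> -> v \in <[c]> -> commute u v.
Proof. by case/cycleP=> i -> /cycleP[j ->]; apply: commuteX2. Qed.

Lemma exists_ne1 (X : finGroupType) : 1 < #|X| -> exists g : X, g != 1.
Proof.
move=> h; have : [set: X] :!=: 1 by rewrite -cardG_gt1 cardsT.
by case/trivgPn=> g _ g1; exists g.
Qed.

Section Key.
Variables G H : finGroupType.
Hypotheses (hG : 1 < #|G|) (hH : 1 < #|H|)
  (conn : cyclic_graph_connected (G * H)%type).

Lemma keyA (z : G * H) : prime #[z] ->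
  exists w : G * H, [/\ commute w z, prime #[w] & #[w] != #[z]].
Proof.
move=> pz.
have [/existsP[w /and3P[/cent1P cw pw nw]]|no] :=
  boolP [exists w : G * H, [&& w \in 'C[z], prime #[w] & #[w] != #[z]]].
  by exists w.
have hyp : forall w, commute w z -> prime #[w] -> #[w] = #[z].
  move=> w cw pw; apply/eqP; apply: contraNT no => nw; apply/existsP; exists w.
  by rewrite pw nw (introT (cent1P) cw).
have z1 := prime_neq1 pz.
have inv : forall y, connect (@cyc_adj _) z y -> z \in <[y]>.
  suff gen : forall p u, path (@cyc_adj _) u p -> z \in <[u]> -> z \in <[last u p]>.
    by move=> y /connectP[p pth ->]; apply: gen pth (cycle_id z).
  elim=> [|v p IH] u //= /andP[auv pvp] zu; apply: IH pvp _.
  have [c [uc vc]] := adjP auv.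
  have zc : z \in <[c]> by apply: (subsetP _ _ zu); rewrite cycle_subG.
  have v1 : v != 1 by case/and4P: auv.
  have [q qv pq] := prime_pow v1.
  have qc : q \in <[c]> by apply: (subsetP _ _ qv); rewrite cycle_subG.
  have oq := hyp q (cycle_commute qc zc) pq.
  have : <[q]> :==: <[z]>.
    by rewrite (eq_subG_cyclic (cycle_cyclic c)) ?cycle_subG // -/(order q) oq.
  move/eqP=> eqz; apply: (subsetP _ _ (cycle_id z)).
  by rewrite -eqz cycle_subG.
have [g0 g01] := exists_ne1 hG.
have [h0 h01] := exists_ne1 hH.
have n1 : ((g0, 1) : G * H) != 1 by rewrite pair_eq1 negb_and g01.
have n2 : ((1, h0) : G * H) != 1 by rewrite pair_eq1 negb_and h01 orbT.
have i1 := inv _ (conn z1 n1).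
have i2 := inv _ (conn z1 n2).
case/cycleP: i1 => i e1; case/cycleP: i2 => j e2.
have a2 : z.2 = 1 by rewrite e1 expg_snd /= expg1n.
have a1 : z.1 = 1 by rewrite e2 expg_fst /= expg1n.
by move: z1; rewrite pair_eq1 a1 a2 eqxx /= => /negP.
Qed.
End Key.

Lemma coprime_pr p q : prime p -> prime q -> p != q -> coprime p q.
Proof. by move=> pp pq npq; rewrite prime_coprime // dvdn_prime2. Qed.

Section Pure.
Variables G H : finGroupType.
Implicit Types u v w x y z : (G * H)%type.

Definition PG x := (x.2 == 1) && prime #[x].
Definition PH x := (x.1 == 1) && prime #[x].

Lemma pair_eta x : x = (x.1, x.2). Proof. by case: x. Qed.

Lemma commG w z u : commute w z -> w.2 = 1 -> u.1 = z.1 -> commute w u.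
Proof.
move=> c w2 u1; rewrite (pair_eta w) (pair_eta u) w2 u1.
apply: commute_pair; first by have := commute_fst c.
exact: commute_sym (commute1 _).
Qed.

Lemma commH w z u : commute w z -> w.1 = 1 -> u.2 = z.2 -> commute w u.
Proof.
move=> c w1 u2; rewrite (pair_eta w) (pair_eta u) w1 u2.
apply: commute_pair; last by have := commute_snd c.
exact: commute_sym (commute1 _).
Qed.

Lemma comm_projG w z : commute w z -> commute ((w.1, 1) : G * H) z.
Proof.
move=> c; rewrite (pair_eta z); apply: commute_pair; first exact: commute_fst c.
exact: commute_sym (commute1 _).
Qed.

Lemma comm_projH w z : commute w z -> commute ((1, w.2) : G * H) z.
Proof.
move=> c; rewrite (pair_eta z); apply: commute_pair; last exact: commute_snd c.
exact: commute_sym (commute1 _).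
Qed.

Lemma PG_ord u : PG u -> #[u.1] = #[u].
Proof.
case/andP=> /eqP u2 pu; apply: order_fst => //.
by move: (prime_neq1 pu); rewrite pair_eq1 u2 eqxx andbT.
Qed.

Lemma PH_ord u : PH u -> #[u.2] = #[u].
Proof.
case/andP=> /eqP u1 pu; apply: order_snd => //.
by move: (prime_neq1 pu); rewrite pair_eq1 u1 eqxx.
Qed.

Lemma adj_cross u v : PG u -> PH v -> #[u] != #[v] -> cyc_adj u v.
Proof.
move=> gu hv ne; have pu := andP gu; have pv := andP hv.
apply: adj_cc; rewrite ?prime_neq1 //; try by case: pu; try by case: pv.
- rewrite (pair_eta u) (pair_eta v); case: pu => /eqP -> _; case: pv => /eqP -> _.
  apply: commute_pair; [exact: commute1 | exact: commute_sym (commute1 _)].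
- by apply: coprime_pr => //; [case: pu | case: pv].
Qed.

Lemma prime_pair (a : G) (b : H) p : prime p -> #[a] = p -> #[b] = p ->
  #[((a, b) : G * H)] = p.
Proof.
move=> pp oa ob; apply: prime_order_eq => //.
  by rewrite pair_eq1 negb_and -order_eq1 oa (gtn_eqF (prime_gt1 pp)).
have ea : a ^+ p = 1 by rewrite -oa expg_order.
have eb : b ^+ p = 1 by rewrite -ob expg_order.
by rewrite (pair_eta (_ ^+ _)) expg_fst expg_snd /= ea eb.
Qed.

Hypotheses (hG : 1 < #|G|) (hH : 1 < #|H|)
  (conn : cyclic_graph_connected (G * H)%type).

Lemma keyB z : prime #[z] ->
  exists w, [/\ cyc_adj z w, PG w || PH w, #[w] != #[z] & commute w z].
Proof.
move=> pz; have [w [cw pw nw]] := keyA hG hH conn pz.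
have cop : coprime #[w] #[z] by apply: coprime_pr.
have [c1|c1] := eqVneq w.1 1.
  have d1 : w.2 != 1 by move: (prime_neq1 pw); rewrite pair_eq1 c1 eqxx.
  have o : #[((1, w.2) : G * H)] = #[w] by rewrite order_p1g order_snd.
  have c : commute ((1, w.2) : G * H) z := comm_projH cw.
  exists (1, w.2); split; rewrite ?o //.
  - rewrite adj_sym; apply: adj_cc => //; last by rewrite o.
    + by rewrite prime_neq1 // o.
    + exact: prime_neq1.
  - by rewrite /PH /= eqxx o pw orbT.
have o : #[((w.1, 1) : G * H)] = #[w] by rewrite order_pg1 order_fst.
have c : commute ((w.1, 1) : G * H) z := comm_projG cw.
exists (w.1, 1); split; rewrite ?o //.
- rewrite adj_sym; apply: adj_cc => //; last by rewrite o.
  + by rewrite prime_neq1 // o.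
  + exact: prime_neq1.
- by rewrite /PG /= eqxx o pw.
Qed.

End Pure.

Section Comb.
Variable X : finGroupType.
Implicit Types x y z : X.

Lemma dist2 x y z : cyc_adj x y -> cyc_adj y z -> cyc_dist_le 2 x z.
Proof. by move=> a b; apply: (dist_trans (dist_adj a) (dist_adj b)). Qed.

Lemma dist3 x y z t : cyc_adj x y -> cyc_adj y z -> cyc_adj z t ->
  cyc_dist_le 3 x t.
Proof. by move=> a b c; apply: (dist_trans (dist2 a b) (dist_adj c)). Qed.

Lemma combine (Good : X -> Prop) :
  (forall x, x != 1 -> exists2 g, Good g & cyc_dist_le 2 x g) ->
  (forall g1 g2, Good g1 -> Good g2 -> cyc_dist_le 3 g1 g2) ->
  cyclic_graph_diam_le X 7.
Proof.
move=> near pairs x y x1 y1.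
have [g1 G1 d1] := near x x1; have [g2 G2 d2] := near y y1.
have := dist_trans (dist_trans d1 (pairs _ _ G1 G2)) (dist_sym d2).
by [].
Qed.
End Comb.

Section CaseI.
Variables G H : finGroupType.
Hypotheses (hG : 1 < #|G|) (hH : 1 < #|H|)
  (conn : cyclic_graph_connected (G * H)%type)
  (notwo : forall b1 b2 : H, prime #[b1] -> prime #[b2] -> #[b1] = #[b2]).

Lemma caseI : cyclic_graph_diam_le (G * H)%type 7.
Proof.
have [h h1] := exists_ne1 hH.
have [q _ pq] := prime_pow h1.
pose p := #[q].
pose y0 : G * H := (1, q).
have oy0 : #[y0] = p by rewrite order_p1g.
have Hy0 : PH y0 by rewrite /PH /= eqxx oy0.
have PHp : forall v : G * H, PH v -> #[v] = p.
  move=> v hv; rewrite -(PH_ord hv); apply: notwo => //.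
  by rewrite (PH_ord hv); case/andP: hv.
pose Good (g : G * H) := (PG g && (#[g] != p)) || PH g.
apply: (combine (Good := Good)).
  move=> x x1; have [z zx pz] := prime_pow x1.
  have dxz := dist_pow x1 (prime_neq1 pz) zx.
  have [gz|ngz] := boolP (Good z).
    by exists z => //; apply: dist_mono dxz.
  have ozp : #[z] = p.
    have [z2|z2] := eqVneq z.2 1.
      by move: ngz; rewrite /Good /PG z2 eqxx pz /= negb_or => /andP[/negPn/eqP].
    rewrite -(order_snd z2 pz); apply: notwo => //.
    by rewrite (order_snd z2 pz).
  have [w [azw pw nw _]] := keyB hG hH conn pz.
  exists w; last by apply: (dist_trans dxz (dist_adj azw)).
  rewrite /Good; case/orP: pw => [->|->]; last by rewrite orbT.
  by rewrite -ozp nw.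
move=> g1 g2; rewrite /Good => /orP[/andP[G1 n1]|H1] /orP[/andP[G2 n2]|H2].
- apply: (dist_mono (m := 2)) => //; apply: (dist2 (y := y0)).
    by apply: adj_cross; rewrite // oy0.
  by rewrite adj_sym; apply: adj_cross; rewrite // oy0.
- apply: (dist_mono (m := 1)) => //; apply: dist_adj; apply: adj_cross => //.
  by rewrite (PHp _ H2).
- apply: (dist_mono (m := 1)) => //; apply: dist_adj; rewrite adj_sym.
  by apply: adj_cross; rewrite // (PHp _ H1).
- have [w [_ pw nw _]] := keyB hG hH conn (andP Hy0).2.
  have Gw : PG w.
    case/orP: pw => // /PHp; rewrite -oy0 => e; by rewrite e eqxx in nw.
  rewrite oy0 in nw.
  apply: (dist_mono (m := 2)) => //; apply: (dist2 (y := w)).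
    by rewrite adj_sym; apply: adj_cross; rewrite // (PHp _ H1).
  by apply: adj_cross; rewrite // (PHp _ H2).
Qed.
End CaseI.

Section CaseII.
Variables G H : finGroupType.
Hypotheses (hG : 1 < #|G|) (hH : 1 < #|H|)
  (conn : cyclic_graph_connected (G * H)%type).
Implicit Types u v w z : (G * H)%type.

Lemma PG_prime u : PG u -> prime #[u]. Proof. by case/andP. Qed.
Lemma PH_prime u : PH u -> prime #[u]. Proof. by case/andP. Qed.
Lemma PG_2 u : PG u -> u.2 = 1. Proof. by case/andP=> /eqP. Qed.
Lemma PH_1 u : PH u -> u.1 = 1. Proof. by case/andP=> /eqP. Qed.

Lemma adjGG u w : PG u -> PG w -> commute w u -> #[u] != #[w] -> cyc_adj u w.
Proof.
move=> gu gw c ne; apply: adj_cc.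
- exact: prime_neq1 (PG_prime gu).
- exact: prime_neq1 (PG_prime gw).
- exact: commute_sym.
- by apply: coprime_pr; rewrite ?PG_prime.
Qed.

Lemma adjHH u w : PH u -> PH w -> commute w u -> #[u] != #[w] -> cyc_adj u w.
Proof.
move=> gu gw c ne; apply: adj_cc.
- exact: prime_neq1 (PH_prime gu).
- exact: prime_neq1 (PH_prime gw).
- exact: commute_sym.
- by apply: coprime_pr; rewrite ?PH_prime.
Qed.

Lemma distGH u v : PG u -> PH v -> cyc_dist_le 3 u v.
Proof.
move=> gu hv; have [eq|ne] := eqVneq #[u] #[v]; last first.
  by apply: (dist_mono (m := 1)) => //; apply: dist_adj; apply: adj_cross.
pose z : G * H := (u.1, v.2).
have oz : #[z] = #[u].
  by apply: prime_pair; rewrite ?PG_prime ?(PG_ord gu) ?(PH_ord hv) ?eq.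
have pz : prime #[z] by rewrite oz PG_prime.
have [w [_ pw nw cw]] := keyB hG hH conn pz.
rewrite oz in nw.
apply: (dist_mono (m := 2)) => //; apply: (dist2 (y := w)).
  case/orP: pw => pw.
    apply: adjGG => //; last by rewrite eq_sym.
    by have := commG cw (PG_2 pw) (u := u); apply.
  by apply: adj_cross; rewrite // eq_sym.
case/orP: pw => pw.
  by apply: adj_cross; rewrite // -eq.
rewrite adj_sym; apply: adjHH => //; last by rewrite -eq eq_sym.
by have := commH cw (PH_1 pw) (u := v); apply.
Qed.

Lemma distGG_b u v (b : H) : PG u -> PG v -> #[b] = #[u] -> #[u] != #[v] ->
  cyc_dist_le 3 u v.
Proof.
move=> gu gv ob ne.
pose y : G * H := (1, b).
have oy : #[y] = #[u] by rewrite order_p1g.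
have hy : PH y by rewrite /PH /= eqxx oy PG_prime.
pose z : G * H := (u.1, b).
have oz : #[z] = #[u].
  by apply: prime_pair; rewrite ?PG_prime ?(PG_ord gu).
have pz : prime #[z] by rewrite oz PG_prime.
have [w [_ pw nw cw]] := keyB hG hH conn pz.
rewrite oz in nw.
have ayv : cyc_adj y v by rewrite adj_sym; apply: adj_cross; rewrite // oy eq_sym.
case/orP: pw => pw.
  apply: (dist3 (y := w) (z := y)) => //.
    apply: adjGG => //; last by rewrite eq_sym.
    by have := commG cw (PG_2 pw) (u := u); apply.
  by apply: adj_cross; rewrite // oy.
apply: (dist3 (y := w) (z := y)) => //.
  by apply: adj_cross; rewrite // eq_sym.
rewrite adj_sym; apply: adjHH => //; last by rewrite oy eq_sym.
by have := commH cw (PH_1 pw) (u := y); apply.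
Qed.

Lemma distGG_two (b1 b2 : H) u v : prime #[b1] -> prime #[b2] -> #[b1] != #[b2] ->
  PG u -> PG v -> cyc_dist_le 3 u v.
Proof.
move=> p1 p2 n12 gu gv.
have viaH : forall b : H, prime #[b] -> #[b] != #[u] -> #[b] != #[v] ->
    cyc_dist_le 3 u v.
  move=> b pb nu nv; pose y : G * H := (1, b).
  have oy : #[y] = #[b] by rewrite order_p1g.
  have hy : PH y by rewrite /PH /= eqxx oy.
  apply: (dist_mono (m := 2)) => //; apply: (dist2 (y := y)).
    by apply: adj_cross; rewrite // oy eq_sym.
  by rewrite adj_sym; apply: adj_cross; rewrite // oy eq_sym.
have [e1u|n1u] := eqVneq #[b1] #[u].
  have n2u : #[b2] != #[u] by rewrite -e1u eq_sym.
  have [e2v|n2v] := eqVneq #[b2] #[v]; last exact: viaH n2u n2v.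
  by apply: (distGG_b (b := b1)) => //; rewrite -e1u -e2v.
have [e1v|n1v] := eqVneq #[b1] #[v]; last exact: viaH n1u n1v.
have [e2u|n2u] := eqVneq #[b2] #[u]; last first.
  have n2v : #[b2] != #[v] by rewrite -e1v eq_sym.
  exact: viaH n2u n2v.
by apply: (distGG_b (b := b2)) => //; rewrite -e2u -e1v eq_sym.
Qed.
End CaseII.

Definition sw (A B : Type) (x : A * B) : B * A := (x.2, x.1).

Section Swap.
Variables G H : finGroupType.
Implicit Types x y c : (G * H)%type.

Lemma swK x : sw (sw x) = x. Proof. by case: x. Qed.

Lemma sw_exp x n : sw (x ^+ n) = (sw x) ^+ n.
Proof.
by rewrite [RHS]pair_eta /sw !expg_fst !expg_snd.
Qed.

Lemma sw_eq1 x : (sw x == 1) = (x == 1).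
Proof. by rewrite !pair_eq1 andbC. Qed.

Lemma sw_inj : injective (@sw G H).
Proof. by move=> x y e; rewrite -(swK x) e swK. Qed.

Lemma sw_cycle y c : y \in <[c]> -> sw y \in <[sw c]>.
Proof. by case/cycleP=> i ->; rewrite sw_exp mem_cycle. Qed.

Lemma adj_sw x y : cyc_adj x y -> cyc_adj (sw x) (sw y).
Proof.
move=> a; have [c [xc yc]] := adjP a; case/and4P: a => x1 y1 xy _.
apply: (adj_intro (c := sw c)); rewrite ?sw_eq1 ?sw_cycle //.
by rewrite (inj_eq sw_inj).
Qed.

Lemma order_sw x : #[sw x] = #[x].
Proof. by apply: order_eq => n; rewrite -sw_exp sw_eq1. Qed.

Lemma PG_sw x : PH x -> PG (sw x).
Proof. by rewrite /PH /PG order_sw. Qed.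

Lemma dist_sw n x y : cyc_dist_le n x y -> cyc_dist_le n (sw x) (sw y).
Proof.
case=> s sz /andP[p /eqP l]; exists (map (@sw _ _) s); first by rewrite size_map.
rewrite (homo_path (e := @cyc_adj _) (e' := @cyc_adj _) _ p) ?last_map ?l ?eqxx //.
exact: adj_sw.
Qed.

End Swap.

Lemma conn_sw (G H : finGroupType) : cyclic_graph_connected (G * H)%type ->
  cyclic_graph_connected (H * G)%type.
Proof.
move=> conn x y x1 y1.
have := conn (sw x) (sw y); rewrite !sw_eq1 => /(_ x1 y1) /connectP[p pth e].
apply/connectP; exists (map (@sw _ _) p).
  by have := homo_path (e := @cyc_adj _) (e' := @cyc_adj _) (@adj_sw _ _) pth; rewrite swK.
by rewrite -[x in last x _]swK last_map -e swK.
Qed.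

Lemma diam_sw (G H : finGroupType) n :
  cyclic_graph_diam_le (H * G)%type n -> cyclic_graph_diam_le (G * H)%type n.
Proof.
move=> d x y x1 y1; have := d (sw x) (sw y); rewrite !sw_eq1 => /(_ x1 y1).
by move/dist_sw; rewrite !swK.
Qed.

Definition twoprimes (K : finGroupType) :=
  [exists b1 : K, exists b2 : K, [&& prime #[b1], prime #[b2] & #[b1] != #[b2]]].

Lemma notwoP (K : finGroupType) : ~~ twoprimes K ->
  forall b1 b2 : K, prime #[b1] -> prime #[b2] -> #[b1] = #[b2].
Proof.
move=> n b1 b2 p1 p2; apply/eqP; apply: contraNT n => ne.
by apply/existsP; exists b1; apply/existsP; exists b2; rewrite p1 p2 ne.
Qed.

Theorem theorem4p2 (G H : finGroupType) :
  1 < #|G| -> 1 < #|H| ->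
  cyclic_graph_connected (G * H)%type ->
  cyclic_graph_diam_le (G * H)%type 7.
Proof.
move=> hG hH conn.
have [tH|nH] := boolP (twoprimes H); last exact: caseI hG hH conn (notwoP nH).
have [tG|nG] := boolP (twoprimes G); last first.
  by apply: diam_sw; apply: caseI hH hG (conn_sw conn) (notwoP nG).
case/existsP: tH => b1 /existsP[b2 /and3P[p1 p2 n12]].
case/existsP: tG => a1 /existsP[a2 /and3P[q1 q2 m12]].
apply: (combine (Good := fun g => PG g || PH g)).
  move=> x x1; have [z zx pz] := prime_pow x1.
  have dxz := dist_pow x1 (prime_neq1 pz) zx.
  have [w [azw pw _ _]] := keyB hG hH conn pz.
  by exists w => //; apply: (dist_trans dxz (dist_adj azw)).
move=> g1 g2 /orP[G1|H1] /orP[G2|H2].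
- exact: (distGG_two hG hH conn p1 p2 n12).
- exact: distGH.
- by apply: dist_sym; apply: distGH.
- have := distGG_two hH hG (conn_sw conn) q1 q2 m12 (PG_sw H1) (PG_sw H2).
  by move/dist_sw; rewrite !swK.
Qed.
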